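(* Let $r,n,s_1,\ldots,s_r\in\mathbb{N}$ (positive integers) with $r\leq n$. If $n\geq 2$, then $$\overline{H}_n^{\star}(s_1,\ldots,s_r)=\sum_{0\leq k_1\leq k_2\leq\cdots\leq k_r\leq n-1}\prod_{j=1}^{r}\frac{1}{(2k_j+1)^{s_j}}$$ is not an integer.
   Context: $\mathbb{N}$ denotes the set of positive integers. $\overline{H}_n^{\star}(s_1,\ldots,s_r)$ is called the odd multiple harmonic star sum. *)

(* Defs.v *)
From HB Require Import structures.
From mathcomp Require Import all_boot all_order all_algebra.
Set Implicit Arguments. Unset Strict Implicit. Unset Printing Implicit Defensive.
Import Order.TTheory GRing.Theory Num.Theory.
Local Open Scope ring_scope.

(* Odd multiple harmonic star sum
   Hbar*_n(s_1,...,s_r) = sum_{0 <= k_1 <= ... <= k_r <= n-1}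
                            prod_{j=1}^r 1/(2 k_j + 1)^{s_j},
   with indices j in 'I_r (0-based) and k_j in 'I_n = {0,...,n-1}. *)
Definition odd_mhs_star (r n : nat) (s : 'I_r -> nat) : rat :=
  \sum_(k : {ffun 'I_r -> 'I_n} |
          [forall i : 'I_r, forall j : 'I_r, (i <= j)%N ==> (k i <= k j)%N])
    \prod_(j < r) (((k j).*2.+1)%:R ^+ (s j))^-1.

(* Main.v *)
Require Import Defs.
From HB Require Import structures.
From mathcomp Require Import all_boot all_order all_algebra.
From mathcomp Require Import ring zify.
Import Order.TTheory GRing.Theory Num.Theory.
Local Open Scope ring_scope.

Definition loc3 (x : rat) := exists (a : int) (b : nat), ~~ (3 %| b)%N /\ x = a%:~R / b%:R.
Definition I3 (x : rat) := exists y, loc3 y /\ x = 3 * y.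

Lemma nat3_neq0 {b : nat} : ~~ (3 %| b)%N -> (b%:R : rat) != 0.
Proof. move=> hb; rewrite pnatr_eq0; apply: contra hb => /eqP ->; exact: dvdn0. Qed.

Lemma loc3_int (z : int) : loc3 z%:~R.
Proof. exists z, 1%N; split => //; by rewrite divr1. Qed.

Lemma loc3D x y : loc3 x -> loc3 y -> loc3 (x + y).
Proof.
move=> [a [b [hb ->]]] [c [d [hd ->]]].
exists (a * d%:Z + c * b%:Z), (b * d)%N; split.
  by rewrite Euclid_dvdM // negb_or hb hd.
have hb0 := nat3_neq0 hb; have hd0 := nat3_neq0 hd.
rewrite intrD !intrM natrM /=.
rewrite -[(d%:Z)%:~R]/(d%:R : rat) -[(b%:Z)%:~R]/(b%:R : rat).
by field; apply/andP; split.
Qed.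

Lemma loc3M x y : loc3 x -> loc3 y -> loc3 (x * y).
Proof.
move=> [a [b [hb ->]]] [c [d [hd ->]]].
exists (a * c), (b * d)%N; split.
  by rewrite Euclid_dvdM // negb_or hb hd.
have hb0 := nat3_neq0 hb; have hd0 := nat3_neq0 hd.
rewrite !intrM natrM /=.
by field; apply/andP; split.
Qed.

Lemma loc3N x : loc3 x -> loc3 (- x).
Proof.
move=> [a [b [hb ->]]]; exists (- a), b; split => //.
by rewrite intrN mulNr.
Qed.

Lemma loc3X x k : loc3 x -> loc3 (x ^+ k).
Proof.
move=> hx; elim: k => [|k IH]; first by rewrite expr0; exact: (loc3_int 1).
by rewrite exprS; apply: loc3M.
Qed.

Lemma loc3_prod (I : finType) (P : pred I) F :
  (forall i, P i -> loc3 (F i)) -> loc3 (\prod_(i | P i) F i).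
Proof.
move=> h; apply: (big_ind loc3) => //; first exact: (loc3_int 1).
exact: loc3M.
Qed.

Lemma I3D x y : I3 x -> I3 y -> I3 (x + y).
Proof.
move=> [u [hu ->]] [v [hv ->]]; exists (u + v); split; first exact: loc3D.
by rewrite mulrDr.
Qed.

Lemma I3N x : I3 x -> I3 (- x).
Proof.
move=> [u [hu ->]]; exists (- u); split; first exact: loc3N.
by rewrite mulrN.
Qed.

Lemma I3M x y : loc3 x -> I3 y -> I3 (x * y).
Proof.
move=> hx [u [hu ->]]; exists (x * u); split; first exact: loc3M.
by rewrite mulrCA.
Qed.

Lemma I3_sum (I : finType) (P : pred I) F :
  (forall i, P i -> I3 (F i)) -> I3 (\sum_(i | P i) F i).
Proof.
move=> h; apply: (big_ind I3) => //; last exact: I3D.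
exists 0; split; last by rewrite mulr0.
exact: (loc3_int 0).
Qed.

Lemma not_I3_1 : ~ I3 1.
Proof.
move=> [y [[a [b [hb ->]]] e]].
have hb0 := nat3_neq0 hb.
have e2 : (b%:R : rat) = 3 * a%:~R.
  by apply/(mulIf (invr_neq0 hb0)); rewrite mulfV // -mulrA.
have e3 : (b%:Z) = 3 * a.
  apply: (@intr_inj rat); by rewrite intrM.
move/negP: hb; apply.
have -> : b = `|b%:Z|%N by [].
by rewrite e3 abszM dvdn_mulr.
Qed.

Section Main.
Variable n : nat.
Hypothesis hn : (2 <= n)%N.

Definition ta := trunc_log 3 (n.*2.-1).

Lemma ta_bounds : (3 ^ ta <= n.*2.-1 < 3 ^ ta.+1)%N.
Proof. apply: trunc_log_bounds => //; rewrite -!subn1 -!mul2n; lia. Qed.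

Lemma ta_gt0 : (0 < ta)%N.
Proof. rewrite trunc_log_gt0 /=; rewrite -!subn1 -!mul2n; lia. Qed.

Lemma odd3 k : odd (3 ^ k).
Proof. by rewrite oddX orbT. Qed.

Definition kstar := (3 ^ ta).-1./2.

Lemma kstarE : (kstar.*2.+1 = 3 ^ ta)%N.
Proof.
rewrite /kstar; have := odd3 ta; have : (0 < 3 ^ ta)%N by rewrite expn_gt0.
case: (3 ^ ta)%N => // m _ /= om.
by rewrite -[in RHS](odd_double_half m) -(negbK (odd m)) om add0n.
Qed.

Lemma kstar_lt : (kstar < n)%N.
Proof. have := ta_bounds; have := kstarE; rewrite -!subn1 -!mul2n; lia. Qed.

Definition cc (k : nat) : rat := (3 ^ ta)%:R / (k.*2.+1)%:R.

Lemma cc_dec k : (k < n)%N -> exists u v, [/\ ~~ (3 %| u)%N, (v <= ta)%N,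
   (k.*2.+1 = u * 3 ^ v)%N & (k != kstar -> v < ta)%N].
Proof.
move=> kn.
have [u cu e] := pfactor_coprime (isT : prime 3) (ltn0Sn k.*2).
move: e; set v := logn 3 k.*2.+1 => e.
rewrite prime_coprime // in cu.
have u0 : (0 < u)%N by case: u cu {e}.
have hb := ta_bounds.
have hv : (v <= ta)%N.
  rewrite -ltnS -(ltn_exp2l _ _ (isT : (1 < 3)%N)).
  apply: leq_ltn_trans (proj2 (andP hb)).
  apply: (@leq_trans k.*2.+1); last by rewrite -!subn1 -!mul2n; lia.
  by rewrite e leq_pmull.
exists u, v; split => // nk.
rewrite ltn_neqAle hv andbT; apply/negP => /eqP ev.
rewrite ev in e.
have ou : odd u by have := congr1 odd e; rewrite oddS odd_double oddM odd3 andbT => <-.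
have u1 : u != 1%N.
  apply/negP => /eqP u1; move: nk; rewrite u1 mul1n -kstarE in e.
  by move: e => /eqP; rewrite eqSS -!mul2n eqn_pmul2l // => /eqP ->; rewrite eqxx.
have u3 : (3 <= u)%N.
  case: u ou u1 u0 {e cu} => // [[|[|m]]] //.
have : (3 ^ ta.+1 <= k.*2.+1)%N by rewrite e expnS leq_mul2r u3 orbT.
move: hb; move: (3 ^ ta.+1)%N (3 ^ ta)%N => A B.
rewrite -!subn1 -!mul2n; lia.
Qed.

Lemma cc_loc k : (k < n)%N -> loc3 (cc k).
Proof.
move=> /cc_dec [u [v [cu hv e _]]].
exists (3 ^ (ta - v))%N%:Z, u; split => //.
rewrite /cc e natrM -[((3 ^ (ta - v))%N%:Z)%:~R]/(((3 ^ (ta - v))%N)%:R : rat).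
rewrite -{1}(subnK hv) expnD !natrM.
have := nat3_neq0 cu; have : ((3 ^ v)%N%:R : rat) != 0 by rewrite pnatr_eq0 expn_eq0.
move=> h1 h2; field; by apply/andP.
Qed.

Lemma cc_I k : (k < n)%N -> k != kstar -> I3 (cc k).
Proof.
move=> /cc_dec [u [v [cu hv e hl]]] /hl {}hl.
exists (((3 ^ (ta - v.+1))%N%:Z)%:~R / u%:R); split; first by exists (3 ^ (ta - v.+1))%N%:Z, u.
rewrite /cc e natrM -[((3 ^ (ta - v.+1))%N%:Z)%:~R]/(((3 ^ (ta - v.+1))%N)%:R : rat).
rewrite -{1}(subnK hl) expnD expnS !natrM.
have := nat3_neq0 cu; have : ((3 ^ v)%N%:R : rat) != 0 by rewrite pnatr_eq0 expn_eq0.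
move=> h1 h2; field; by apply/andP.
Qed.

Lemma cc_star : cc kstar = 1.
Proof. by rewrite /cc kstarE divff // pnatr_eq0 expn_eq0. Qed.

End Main.

Lemma loc3_nat (m : nat) : loc3 m%:R.
Proof. exact: (loc3_int m%:Z). Qed.

Theorem theorem1p1 (r n : nat) (s : 'I_r -> nat) :
  (0 < r)%N -> (0 < n)%N -> (forall j, (0 < s j)%N) -> (r <= n)%N ->
  (2 <= n)%N ->
  ~ (exists z : int, odd_mhs_star n s = z%:~R).
Proof.
move=> r0 n0 s0 _ hn [z hz].
set T := ((3 ^ ta n)%N%:R : rat).
set S := (\sum_(j < r) s j)%N.
have S0 : (0 < S)%N.
  by rewrite /S (bigD1 (Ordinal r0)) //= addn_gt0 s0.
pose k0 : {ffun 'I_r -> 'I_n} := [ffun _ => Ordinal (kstar_lt n hn)].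
have key : exists X, I3 X /\ T ^+ S * odd_mhs_star n s = 1 + X.
  rewrite /odd_mhs_star mulr_sumr.
  rewrite (bigD1 k0) /=; last first.
    by apply/forallP => i; apply/forallP => j; apply/implyP => _; rewrite !ffunE.
  rewrite [X in X + _](_ : _ = 1); last first.
    rewrite /S -prodrXr -big_split /=; apply: big1 => j _.
    by rewrite ffunE /= -exprVn -exprMn -/(cc n _) (cc_star n) expr1n.
  eexists; split; last reflexivity.
  apply: I3_sum => k /andP [_ nk].
  rewrite /S -prodrXr -big_split /=.
  have -> : \prod_(i < r) (T ^+ s i * (((k i).*2.+1)%:R ^+ s i)^-1) =
            \prod_(i < r) cc n (k i) ^+ s i.
    by apply: eq_bigr => i _; rewrite -exprVn -exprMn.
  case: (pickP (fun j => (k j : nat) != kstar n)) => [j hj | h]; last first.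
    move/eqP: nk; case; apply/ffunP => j; rewrite ffunE; apply/val_inj => /=.
    by move/negbFE/eqP: (h j).
  rewrite (bigD1 j) //= mulrC; apply: I3M.
    apply: loc3_prod => i _.
    exact: (loc3X _ _ (cc_loc n hn _ (ltn_ord _))).
  rewrite -(prednK (s0 j)) exprSr; apply: I3M.
    exact: (loc3X _ _ (cc_loc n hn _ (ltn_ord _))).
  exact: (cc_I n hn _ (ltn_ord _)).
have [X [hX e]] := key.
have h1 : I3 (T ^+ S * z%:~R).
  have ta0 := ta_gt0 n hn.
  exists ((3 ^ (ta n).-1)%N%:R * T ^+ S.-1 * z%:~R); split.
    apply: loc3M; last exact: loc3_int.
    by apply: loc3M; [exact: loc3_nat | apply: loc3X; exact: loc3_nat].
  rewrite -{1}(prednK S0) exprSr /T -{2}(prednK ta0) expnS natrM.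
  ring.
apply: not_I3_1.
have -> : (1 : rat) = T ^+ S * z%:~R + - X by rewrite -hz e addrK.
by apply: I3D => //; apply: I3N.
Qed.
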